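(* Let $(X_k)$ be a Markov chain on a finite state space $E$ with irreducible, aperiodic transition matrix $P$, reversible with respect to its stationary distribution $\pi$, started from $\pi$. Let $\lambda$ be the second largest eigenvalue of $P$, $\lambda_0=\max(0,\lambda)$, and let $f:E\to\mathbb R$ with $\min f(E)=0$, $\max f(E)=1$, $\mu=\mathbb E_\pi f(X_k)$, $S_n=\sum_{k=1}^nf(X_k)$. Let $D=\mathrm{diag}(\sqrt{\pi_i})$, $D_t=\mathrm{diag}(e^{tf(i)/2})$, $\gamma_1=(\sqrt{\pi_i})_{i\in E}$, $G_t=D_tDPD^{-1}D_t$, $H_t=D_t[\lambda_0I+(1-\lambda_0)\gamma_1\gamma_1']D_t$, and let $\zeta(t)$ and $\eta(t)$ be the largest eigenvalues of $G_t$ and $H_t$ respectively. Then for every $\varepsilon>0$, $n\ge1$ and $t\ge0$, $$\mathbb P_\pi[S_n\ge n(\mu+\varepsilon)]\le\|D_t\gamma_1\|^2\zeta(t)^{-1}\exp\{-n[t(\mu+\varepsilon)-\log\zeta(t)]\}\le\|D_t\gamma_1\|^2\eta(t)^{-1}\exp\{-n[t(\mu+\varepsilon)-\log\eta(t)]\},$$ and furthermore $$\mathbb P_\pi[S_n\ge n(\mu+\varepsilon)]\le\exp\{-n[t(\mu+\varepsilon)-\log\eta(t)]\}.$$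
   Context: Reversibility means $\pi_ip_{ij}=\pi_jp_{ji}$ for all $i,j$; then all eigenvalues of $P$ are real, listed as $1=\lambda_1>\lambda_2\ge\cdots$ with multiplicity, and the second largest eigenvalue is $\lambda=\lambda_2$. Diagonal matrices and vectors are indexed by the states of $E$ in a fixed order. $\|\cdot\|$ is the Euclidean norm. Note $DPD^{-1}$ is symmetric, so $G_t$ and $H_t$ are symmetric. *)

(* Defs.v *)
From HB Require Import structures.
From mathcomp Require Import all_boot all_order all_algebra.
From mathcomp Require Import all_classical all_reals all_analysis.
Set Implicit Arguments. Unset Strict Implicit. Unset Printing Implicit Defensive.
Import Order.TTheory GRing.Theory Num.Theory.
Local Open Scope ring_scope.

Section MarkovDefs.
Variable R : realType.
Variable N : nat.
Implicit Types (P : 'M[R]_N) (pi : 'rV[R]_N).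

Definition stochastic P :=
  (forall i j, 0 <= P i j) /\ (forall i, \sum_j P i j = 1).

Definition stationary_distribution P pi :=
  (forall i, 0 <= pi 0 i) /\ \sum_i pi 0 i = 1 /\ pi *m P = pi.

Definition irreducible P := forall i j, exists m : nat, 0 < (P ^+ m) i j.

(* every state has period 1: the gcd of its return times is 1 *)
Definition aperiodic P :=
  forall i (d : nat),
    (forall m : nat, (0 < m)%N -> 0 < (P ^+ m) i i -> (d %| m)%N) -> d = 1%N.

Definition reversible P pi := forall i j, pi 0 i * P i j = pi 0 j * P j i.

Definition sorted_eigenvalues P (s : seq R) :=
  char_poly P = \prod_(x <- s) ('X - x%:P) /\ sorted (>=%R) s.

Definition largest_eigenvalue (A : 'M[R]_N) (z : R) :=
  eigenvalue A z /\ (forall w, eigenvalue A w -> w <= z).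

Definition vnorm (v : 'cV[R]_N) : R := Num.sqrt (\sum_i v i 0 ^+ 2).

(* Law of the chain (X_0, ..., X_k) started from pi: weight of a path *)
Definition path_weight P pi (k : nat) (x : {ffun 'I_k.+1 -> 'I_N}) : R :=
  pi 0 (x ord0) * \prod_(j < k) P (x (inord j)) (x (inord j.+1)).

Definition chain_prob P pi (k : nat) (A : pred {ffun 'I_k.+1 -> 'I_N}) : R :=
  \sum_(x | A x) path_weight P pi x.

Definition partial_sum (f : 'I_N -> R) (k : nat) (x : {ffun 'I_k.+1 -> 'I_N}) : R :=
  \sum_(j < k) f (x (inord j.+1)).

Definition sqrt_diag pi : 'M[R]_N := diag_mx (\row_i Num.sqrt (pi 0 i)).
Definition gamma1 pi : 'cV[R]_N := \col_i Num.sqrt (pi 0 i).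
Definition Dt (f : 'I_N -> R) (t : R) : 'M[R]_N := diag_mx (\row_i expR (t * f i / 2)).

Definition Gt P pi f t : 'M[R]_N :=
  Dt f t *m sqrt_diag pi *m P *m invmx (sqrt_diag pi) *m Dt f t.

Definition Ht pi f t (lam0 : R) : 'M[R]_N :=
  Dt f t *m (lam0%:M + (1 - lam0) *: (gamma1 pi *m (gamma1 pi)^T)) *m Dt f t.

End MarkovDefs.

(* Main.v *)
Require Import Defs.
From HB Require Import structures.
From mathcomp Require Import all_boot all_order all_algebra.
From mathcomp Require Import all_classical all_reals all_analysis.
From mathcomp Require Import ring lra.
Import Order.TTheory GRing.Theory Num.Theory.
Import numFieldTopology.Exports numFieldNormedType.Exports.
Set Implicit Arguments. Unset Strict Implicit. Unset Printing Implicit Defensive.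
Local Open Scope ring_scope.

Section Ray.
Variable R : realType.

Definition bil n (S : 'M[R]_n) (x y : 'rV[R]_n) : R := (x *m S *m y^T) 0 0.
Definition nrm n (x : 'rV[R]_n) : R := (x *m x^T) 0 0.

Lemma bilE n (S : 'M[R]_n) x y :
  bil S x y = \sum_i \sum_j x 0 i * S i j * y 0 j.
Proof.
rewrite /bil mxE; under eq_bigr do rewrite !mxE big_distrl /=.
by rewrite exchange_big.
Qed.

Lemma nrmE n (x : 'rV[R]_n) : nrm x = \sum_i x 0 i ^+ 2.
Proof. by rewrite /nrm mxE; apply: eq_bigr => i _; rewrite mxE expr2. Qed.

Lemma nrm_ge0 n (x : 'rV[R]_n) : 0 <= nrm x.
Proof. by rewrite nrmE sumr_ge0 // => i _; rewrite sqr_ge0. Qed.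

Lemma nrm_eq0 n (x : 'rV[R]_n) : nrm x = 0 -> x = 0.
Proof.
rewrite nrmE => /eqP; rewrite psumr_eq0 => [/allP H|i _]; last by rewrite sqr_ge0.
apply/rowP => i; rewrite mxE; apply/eqP; rewrite -sqrf_eq0.
by move: (H i (mem_index_enum _)).
Qed.

Lemma bilZl n S a (x y : 'rV[R]_n) : bil S (a *: x) y = a * bil S x y.
Proof. by rewrite /bil -!scalemxAl mxE. Qed.
Lemma bilZr n S a (x y : 'rV[R]_n) : bil S x (a *: y) = a * bil S x y.
Proof. by rewrite /bil linearZ -scalemxAr mxE. Qed.
Lemma bilDl n S (x y z : 'rV[R]_n) : bil S (x + y) z = bil S x z + bil S y z.
Proof. by rewrite /bil !mulmxDl mxE. Qed.
Lemma bilDr n S (x y z : 'rV[R]_n) : bil S x (y + z) = bil S x y + bil S x z.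
Proof. by rewrite /bil linearD mulmxDr mxE. Qed.
Lemma bilC n (S : 'M[R]_n) x y : S^T = S -> bil S x y = bil S y x.
Proof.
move=> hS; rewrite /bil.
transitivity (((y *m S *m x^T)^T) 0 0); last by rewrite mxE.
by rewrite !trmx_mul trmxK hS mulmxA.
Qed.
Lemma nrm_bil n (x : 'rV[R]_n) : nrm x = bil 1%:M x x.
Proof. by rewrite /bil /nrm mulmx1. Qed.

Lemma bil_scalar n a (x y : 'rV[R]_n) : bil a%:M x y = a * (x *m y^T) 0 0.
Proof. by rewrite /bil mul_mx_scalar -scalemxAl mxE. Qed.

Lemma bilDm n (S1 S2 : 'M[R]_n) x y : bil (S1 + S2) x y = bil S1 x y + bil S2 x y.
Proof. by rewrite /bil mulmxDr mulmxDl mxE. Qed.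
Lemma bilBm n (S1 S2 : 'M[R]_n) x y : bil (S1 - S2) x y = bil S1 x y - bil S2 x y.
Proof. by rewrite /bil mulmxBr mulmxBl [LHS]mxE [X in _ + X = _]mxE. Qed.
Lemma bilZm n a (S : 'M[R]_n) x y : bil (a *: S) x y = a * bil S x y.
Proof. by rewrite /bil -scalemxAr -scalemxAl mxE. Qed.
Lemma bil_rank1 n (a b x y : 'rV[R]_n) : bil (a^T *m b) x y = (x *m a^T) 0 0 * (b *m y^T) 0 0.
Proof. by rewrite /bil mulmxA -mulmxA mxE big_ord1. Qed.
Lemma bil_sq n (S : 'M[R]_n) (z g : 'rV[R]_n) a :
  bil S (z + a *: g) (z + a *: g) = bil S z z + a * bil S z g + a * bil S g z + a * a * bil S g g.
Proof. rewrite !(bilDl, bilDr, bilZl, bilZr); ring. Qed.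

Lemma continuous_big n (I : Type) (r : seq I) (F : I -> 'rV[R]_n -> R) :
  (forall i, continuous (F i)) -> continuous (fun x => \sum_(i <- r) F i x).
Proof.
move=> hF; elim: r => [|a r IH].
  by under eq_fun do rewrite big_nil; exact: cst_continuous.
under eq_fun do rewrite big_cons.
by move=> x; apply: continuousD; [exact: hF | exact: IH].
Qed.

Lemma bnd n (A : set 'rV[R]_n) : (forall v, A v -> forall i, `|v 0 i| <= 1) -> bounded_set A.
Proof.
move=> hA.
exists 1; split; first by rewrite num_real.
move=> M M1 v Av.
rewrite /=.
have -> : `|v| = mx_norm v by [].
rewrite mx_normrE.
apply: bigmax_le; first by rewrite ltW// (lt_trans _ M1).
move=> [i j] _ /=; rewrite ord1; apply: ltW; apply: le_lt_trans M1; exact: hA.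
Qed.

Lemma rayleigh n (S : 'M[R]_n) : (0 < n)%N -> S^T = S ->
  exists m, (exists2 w : 'rV_n, w *m S = m *: w & w != 0) /\
    forall x : 'rV_n, bil S x x <= m * nrm x.
Proof.
move=> n0 hS.
pose A := [set v : 'rV[R]_n | nrm v = 1]%classic.
pose q := fun v : 'rV[R]_n => bil S v v.
have cq : continuous q.
  rewrite /q; under eq_fun do rewrite bilE.
  apply: continuous_big => i; apply: continuous_big => j.
  move=> x; apply: (@continuousM _ _ (fun y : 'rV[R]_n => y 0 i * S i j) (fun y => y 0 j)); last exact: coord_continuous.
  apply: (@continuousM _ _ (fun y : 'rV[R]_n => y 0 i) (fun y => S i j)); last exact: cst_continuous.
  exact: coord_continuous.
have cn : continuous (@nrm n).
  have -> : @nrm n = (fun x => \sum_i x 0 i * x 0 i).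
    by apply/funext => x; rewrite nrmE; apply: eq_bigr => i _; rewrite expr2.
  apply: continuous_big => i y.
  by apply: (@continuousM _ _ (fun y : 'rV[R]_n => y 0 i) (fun y => y 0 i)); exact: coord_continuous.
have A0 : (A !=set0)%classic.
  exists (delta_mx 0 (Ordinal n0)); rewrite /A /= nrmE (bigD1 (Ordinal n0)) //=.
  rewrite big1 ?mxE ?eqxx ?addr0 ?expr1n // => i /negbTE hi.
  by rewrite mxE hi andbF expr0n.
have cA : compact A.
  apply: bounded_closed_compact.
    apply: bnd => v; rewrite /A /= => hv j.
    have : v 0 j ^+ 2 <= 1.
      rewrite -hv nrmE (bigD1 j) //= lerDl sumr_ge0 // => k _; exact: sqr_ge0.
    by move=> h; rewrite -ler_sqr ?nnegrE // real_normK ?num_real // expr1n.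
  have -> : A = ((@nrm n) @^-1` [set 1])%classic by [].
  by move: cn => /continuous_closedP; apply; exact: closed_eq.
have [c cA' cmax] := compact_EVT_max A0 cA (continuous_subspaceT cq).
have hc : nrm c = 1 by move: cA'; rewrite inE.
exists (q c).
have key : forall x, bil S x x <= q c * nrm x.
  move=> x; have [x0|] := eqVneq (nrm x) 0.
    by rewrite x0 mulr0 (nrm_eq0 x0) /bil !mul0mx mxE.
  move=> nx0; have nxp : 0 < nrm x by rewrite lt0r nx0 nrm_ge0.
  pose a := (Num.sqrt (nrm x))^-1.
  have a2 : a ^+ 2 = (nrm x)^-1 by rewrite /a exprVn sqr_sqrtr // nrm_ge0.
  have : q (a *: x) <= q c.
    apply: cmax; rewrite inE /A /= nrm_bil bilZl bilZr -nrm_bil mulrA -expr2 a2.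
    by rewrite mulVf.
  rewrite /q bilZl bilZr mulrA -expr2 a2 => h.
  by rewrite -(@ler_pM2l _ (nrm x)^-1) ?invr_gt0 // mulrCA mulVf // mulr1.
split => //.
pose Bm := (q c)%:M - S.
have bB : forall x y, bil Bm x y = bil (q c)%:M x y - bil S x y.
  by move=> x y; rewrite /bil /Bm mulmxBr mulmxBl [LHS]mxE [X in _ + X = _]mxE.
have BmT : Bm^T = Bm by rewrite /Bm linearB /= tr_scalar_mx hS.
pose b := bil Bm.
have bpos : forall x, 0 <= b x x.
  by move=> x; rewrite /b bB subr_ge0 bil_scalar; exact: key.
have bc : b c c = 0.
  by rewrite /b bB bil_scalar -/(nrm c) hc mulr1 /q subrr.
have bw : forall w, b w c = 0.
  move=> w; pose a := b w c; pose d := b w w.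
  have dge : 0 <= d by exact: bpos.
  have bl : forall s, b (c + s *: w) (c + s *: w) = 2 * s * a + s ^+ 2 * d.
    move=> s; rewrite /b !(bilDl, bilDr, bilZl, bilZr) (@bilC _ Bm c w BmT) -/b bc /a /d.
    ring.
  have d1 : d + 1 != 0 by rewrite lt0r_neq0 // ltr_wpDl.
  have := bpos (c + (- a / (d + 1)) *: w); rewrite bl => h.
  have e : 2 * (- a / (d + 1)) * a + (- a / (d + 1)) ^+ 2 * d
     = - (a ^+ 2 * ((d + 2) / (d + 1) ^+ 2)) by field.
  rewrite e oppr_ge0 in h.
  have k0 : 0 < (d + 2) / (d + 1) ^+ 2.
    by rewrite divr_gt0 // ?exprn_gt0 // ?ltr_wpDl // ltr_wpDl.
  have : a ^+ 2 <= 0 by rewrite -(pmulr_lle0 _ k0).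
  by move=> h2; apply/eqP; rewrite -sqrf_eq0 eq_le h2 sqr_ge0.
have Bc : Bm *m c^T = 0.
  apply/matrixP => i j; rewrite ord1 [RHS]mxE.
  have := bw 'e_i; rewrite /b /bil -mulmxA -rowE mxE => ->.
  done.
have cB : c *m Bm = 0 by apply: trmx_inj; rewrite trmx_mul BmT Bc linear0.
exists c.
  apply/eqP; move: cB; rewrite /Bm mulmxBr mul_mx_scalar => /eqP.
  by rewrite subr_eq0 eq_sym.
by apply/eqP => c0; move: hc; rewrite c0 /nrm mul0mx mxE => /eqP; rewrite eq_sym oner_eq0.
Qed.
End Ray.

Section MK.
Variable R : realType.

Lemma ex_max n (h : 'I_n -> R) (i0 : 'I_n) : exists i, forall j, h j <= h i.
Proof. by case: (@arg_maxP _ _ _ i0 xpredT h isT) => i _ Hi; exists i => j; exact: Hi. Qed.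

Lemma sum_ge_term n (F : 'I_n -> R) j : (forall i, 0 <= F i) -> F j <= \sum_i F i.
Proof.
by move=> hF; rewrite (bigD1 j) //= lerDl sumr_ge0 // => i _.
Qed.

Lemma stoch_pow N (P : 'M[R]_N) : stochastic P -> forall m, stochastic (P ^+ m).
Proof.
move=> [P0 P1]; elim=> [|m [IH0 IH1]].
  split => [i j|i]; rewrite expr0.
    by rewrite mxE; case: (i == j); rewrite ?mulr1n ?mulr0n.
  rewrite (bigD1 i) //= mxE eqxx mulr1n big1 ?addr0 // => j /negbTE.
  by rewrite mxE eq_sym => ->; rewrite mulr0n.
split => [i j|i]; rewrite exprSr -mulmxE.
  by rewrite mxE sumr_ge0 // => k _; rewrite mulr_ge0.
under eq_bigr do rewrite mxE.
rewrite exchange_big /= -(IH1 i); apply: eq_bigr => k _.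
by rewrite -big_distrr /= P1 mulr1.
Qed.

Lemma harm_pow N (P : 'M[R]_N) (h : 'I_N -> R) lam :
  (forall j, \sum_i P j i * h i = lam * h j) ->
  forall m j, \sum_i (P ^+ m) j i * h i = lam ^+ m * h j.
Proof.
move=> hP; elim=> [|m IH] j.
  rewrite expr0 mul1r (bigD1 j) //= mxE eqxx mulr1n mul1r big1 ?addr0 // => i /negbTE.
  by rewrite mxE eq_sym => ->; rewrite mulr0n mul0r.
rewrite exprSr -mulmxE.
under eq_bigr do rewrite mxE big_distrl /=.
rewrite exchange_big /=.
under eq_bigr do (under eq_bigr do rewrite -mulrA; rewrite -big_distrr /= hP mulrCA).
by rewrite -big_distrr /= IH exprS mulrA.
Qed.

Lemma maxprin N (P : 'M[R]_N) (h : 'I_N -> R) lam : stochastic P ->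
  (forall j, \sum_i P j i * h i = lam * h j) -> (exists i, h i != 0) -> `|lam| <= 1.
Proof.
move=> [P0 P1] hP [i0 hi0].
have [j0 hj0] := ex_max (fun i => `|h i|) i0.
have hpos : 0 < `|h j0| by apply: lt_le_trans (hj0 i0); rewrite normr_gt0.
rewrite -(ler_pM2r hpos) mul1r -normrM -hP.
apply: le_trans (ler_norm_sum _ _ _) _.
apply: le_trans (_ : \sum_i P j0 i * `|h j0| <= _).
  by apply: ler_sum => i _; rewrite normrM ger0_norm // ler_wpM2l.
by rewrite -big_distrl /= P1 mul1r.
Qed.

Lemma harm_const N (P : 'M[R]_N) (h : 'I_N -> R) : stochastic P -> irreducible P ->
  (forall j, \sum_i P j i * h i = h j) -> forall i j, h i = h j.
Proof.
move=> sP irr hP.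
have hP' : forall j, \sum_i P j i * h i = 1 * h j by move=> j; rewrite mul1r hP.
suff H : forall i0 j, (forall k, h k <= h i0) -> h j = h i0.
  move=> i j; have [j0 hj0] := ex_max h i.
  by rewrite (H j0 i hj0) (H j0 j hj0).
move=> j0 j hj0.
have [m hm] := irr j0 j.
have [Q0 Q1] := stoch_pow sP m.
have e := harm_pow hP' m j0; rewrite expr1n mul1r in e.
have : \sum_i (P ^+ m) j0 i * (h j0 - h i) = 0.
  under eq_bigr do rewrite mulrBr.
  by rewrite sumrB -big_distrl /= Q1 mul1r e subrr.
move=> s0.
have : (P ^+ m) j0 j * (h j0 - h j) <= 0.
  rewrite -s0; apply: (@sum_ge_term _ (fun i => (P ^+ m) j0 i * (h j0 - h i))).
  by move=> i; rewrite mulr_ge0 // subr_ge0.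
rewrite pmulr_rle0 // subr_le0 => hle.
by apply/eqP; rewrite eq_le hj0 hle.
Qed.

End MK.

Section SP.
Variables (R : realType) (N : nat).
Implicit Types (S : 'M[R]_N) (x : 'rV[R]_N).

Lemma le_largest S z : S^T = S -> (0 < N)%N -> largest_eigenvalue S z ->
  forall x, bil S x x <= z * nrm x.
Proof.
move=> hS n0 [_ hz] x.
have [m [[w wS w0] hm]] := rayleigh n0 hS.
have mz : m <= z by apply: hz; apply/eigenvalueP; exists w.
by apply: le_trans (hm x) _; rewrite ler_wpM2r // nrm_ge0.
Qed.

Lemma abs_bound S z : (forall i j, 0 <= S i j) ->
  (forall x, bil S x x <= z * nrm x) -> forall x, - (z * nrm x) <= bil S x x.
Proof.
move=> S0 hz x.
pose ax : 'rV[R]_N := \row_i `|x 0 i|.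
have nax : nrm ax = nrm x by rewrite !nrmE; apply: eq_bigr => i _; rewrite mxE real_normK // num_real.
apply: le_trans (_ : - bil S ax ax <= _); first by rewrite lerN2 -nax hz.
rewrite !bilE -sumrN; apply: ler_sum => i _; rewrite -sumrN; apply: ler_sum => j _.
apply: lerNnormlW; rewrite !mxE !normrM (ger0_norm (S0 i j)) //.
Qed.

Lemma norm_step S z : S^T = S -> 0 < z ->
  (forall x, bil S x x <= z * nrm x) -> (forall x, - (z * nrm x) <= bil S x x) ->
  forall x, nrm (x *m S) <= z ^+ 2 * nrm x.
Proof.
move=> hS z0 up lo x.
set y := x *m S; set u := z *: x.
have h1 := up (u + 1 *: y); have h2 := lo (u + (-1) *: y).
rewrite !nrm_bil !bil_sq in h1 h2.
rewrite (bilC y u hS) in h1 h2.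
rewrite (bilC y u (tr_scalar_mx _ _)) in h1 h2.
have buy : bil S u y = z * nrm y by rewrite /u bilZl /bil /y.
have nu : bil 1%:M u u = z ^+ 2 * nrm x by rewrite /u bilZl bilZr -nrm_bil; ring.
have nn := nrm_ge0 y.
rewrite buy nu -!nrm_bil in h1 h2.
have : z * nrm y <= z * (z ^+ 2 * nrm x).
  have := nrm_ge0 x; move: (bil 1%:M u y) (bil S u u) (bil S y y) h1 h2 => a b c h1 h2 hx.
  nra.
by rewrite ler_pM2l.
Qed.

Lemma trmxX S m : S^T = S -> (S ^+ m)^T = S ^+ m.
Proof.
move=> hS; elim: m => [|m IH]; first by rewrite expr0 tr_scalar_mx.
by rewrite [in LHS]exprS trmx_mul IH hS exprSr.
Qed.

Lemma pow_norm S z : (forall x, nrm (x *m S) <= z ^+ 2 * nrm x) ->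
  forall m x, nrm (x *m S ^+ m) <= (z ^+ 2) ^+ m * nrm x.
Proof.
move=> hz; elim=> [|m IH] x; first by rewrite expr0 mulmx1 expr0 mul1r.
rewrite exprSr -mulmxE mulmxA; apply: le_trans (hz _) _.
by rewrite [_ ^+ m.+1]exprS -mulrA ler_wpM2l ?sqr_ge0.
Qed.

Lemma pow_bil S z : S^T = S -> 0 <= z -> (forall x, bil S x x <= z * nrm x) ->
  (forall x, nrm (x *m S) <= z ^+ 2 * nrm x) ->
  forall m x, bil (S ^+ m) x x <= z ^+ m * nrm x.
Proof.
move=> hS z0 up hn m x.
rewrite -(odd_double_half m); set k := m./2.
have e : (k.*2 = 2 * k)%N by rewrite mul2n.
have hk := pow_norm hn k x.
have tk : (x *m S ^+ k)^T = S ^+ k *m x^T by rewrite trmx_mul trmxX.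
case: (odd m) => /=.
  have -> : S ^+ (1 + k.*2) = S ^+ k *m S *m S ^+ k.
    have -> : (1 + k.*2 = k + (1 + k))%N by rewrite -addnn addnCA.
    by rewrite !exprD expr1 !mulmxE mulrA.
  have -> : z ^+ (1 + k.*2) = z * (z ^+ 2) ^+ k by rewrite exprD expr1 e exprM.
  have -> : bil (S ^+ k *m S *m S ^+ k) x x = bil S (x *m S ^+ k) (x *m S ^+ k).
    by rewrite /bil tk !mulmxA.
  by apply: le_trans (up _) _; rewrite -mulrA ler_wpM2l.
have -> : S ^+ (0 + k.*2) = S ^+ k *m S ^+ k by rewrite add0n -addnn exprD mulmxE.
have -> : z ^+ (0 + k.*2) = (z ^+ 2) ^+ k by rewrite add0n e exprM.
have -> : bil (S ^+ k *m S ^+ k) x x = nrm (x *m S ^+ k) by rewrite /bil /nrm tk !mulmxA.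
exact: hk.
Qed.

End SP.

Section PTH.
Variables (R : realType) (N : nat) (Q : 'M[R]_N).

Lemma path_sum k : forall (a : 'rV[R]_N) (b : 'cV[R]_N),
  \sum_(x : {ffun 'I_k.+1 -> 'I_N})
     a 0 (x ord0) * (\prod_(j < k) Q (x (inord j)) (x (inord j.+1))) * b (x (inord k)) 0
  = (a *m Q ^+ k *m b) 0 0.
Proof.
elim: k => [|k IH] a b.
  rewrite expr0 mulmx1 mxE.
  rewrite (reindex (fun i : 'I_N => [ffun _ : 'I_1 => i])) /=; last first.
    exists (fun x : {ffun 'I_1 -> 'I_N} => x ord0) => [i _|x _]; first by rewrite ffunE.
    by apply/ffunP => j; rewrite ffunE (ord1 j).
  by apply: eq_bigr => i _; rewrite !ffunE big_ord0 mulr1.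
pose hf := fun (p : 'I_N * {ffun 'I_k.+1 -> 'I_N}) =>
  ([ffun i : 'I_k.+2 => if unlift ord0 i is Some j then p.2 j else p.1] : {ffun 'I_k.+2 -> 'I_N}).
rewrite (reindex hf) /=; last first.
  exists (fun x : {ffun 'I_k.+2 -> 'I_N} => (x ord0, [ffun j => x (lift ord0 j)])).
    move=> [i y] _ /=; congr (_, _); first by rewrite ffunE unlift_none.
    by apply/ffunP => j; rewrite !ffunE liftK.
  move=> x _; apply/ffunP => i; rewrite !ffunE.
  by case: unliftP => [j ->|->] //=; rewrite ffunE.
have L : forall j, (j < k.+1)%N -> (inord j.+1 : 'I_k.+2) = lift ord0 (inord j).
  by move=> j hj; apply: val_inj; rewrite /= /bump leq0n add1n !inordK.
have h0 : forall p, hf p (inord 0) = p.1.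
  move=> p; have -> : (inord 0 : 'I_k.+2) = ord0 by apply: val_inj; rewrite /= inordK.
  by rewrite ffunE unlift_none.
have hS : forall p j, (j < k.+1)%N -> hf p (inord j.+1) = p.2 (inord j).
  by move=> p j hj; rewrite L // ffunE liftK.
have o0 : (inord 0 : 'I_k.+1) = ord0 by apply: val_inj; rewrite /= inordK.
rewrite -(pair_big xpredT xpredT (fun i y => a 0 (hf (i, y) ord0) *
   (\prod_(j < k.+1) Q (hf (i, y) (inord j)) (hf (i, y) (inord j.+1))) *
   b (hf (i, y) (inord k.+1)) 0)) /=.
rewrite exprS -mulmxA mxE.
apply: eq_bigr => i _.
have -> : ((Q * Q ^+ k) *m b) i 0 = (row i Q *m Q ^+ k *m b) 0 0.
  by rewrite -!row_mul [RHS]mxE.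
rewrite -IH big_distrr /=; apply: eq_bigr => y _.
rewrite big_ord_recl /=.
rewrite h0 (hS (i, y) 0%N) //= o0.
rewrite (eq_bigr (fun j : 'I_k => Q (y (inord j)) (y (inord j.+1)))); last first.
  move=> j _; rewrite /bump leq0n add1n (hS (i, y) j); last by rewrite ltnS ltnW.
  by rewrite (hS (i, y) j.+1) //= ltnS ltn_ord.
have -> : hf (i, y) ord0 = i by rewrite ffunE unlift_none.
rewrite (hS (i, y) k) //= mxE.
by rewrite !mulrA.
Qed.
End PTH.

Section Chain.
Variables (R : realType) (N : nat) (P : 'M[R]_N) (pi : 'rV[R]_N).
Hypotheses (sP : stochastic P) (irr : irreducible P)
  (st : stationary_distribution P pi) (rv : reversible P pi).

Lemma pi_pow m : pi *m P ^+ m = pi.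
Proof.
have [_ [_ hP]] := st.
elim: m => [|m IH]; first by rewrite expr0 mulmx1.
by rewrite exprSr -mulmxE mulmxA IH hP.
Qed.

Lemma pi_pos i : 0 < pi 0 i.
Proof.
have [p0 [p1 _]] := st.
have [j hj] : exists j, 0 < pi 0 j.
  apply/existsP; apply: contraT; rewrite negb_exists => /forallP hn.
  have : \sum_i pi 0 i <= 0 by rewrite sumr_le0 // => k _; rewrite leNgt hn.
  by rewrite p1 ler10.
have [m hm] := irr j i.
have [Q0 _] := stoch_pow sP m.
rewrite -(pi_pow m) mxE.
apply: (lt_le_trans (_ : 0 < pi 0 j * (P ^+ m) j i)); first exact: mulr_gt0.
by apply: (@sum_ge_term _ _ (fun k => pi 0 k * (P ^+ m) k i)) => k; rewrite mulr_ge0 //; case: st.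
Qed.

Definition d i := Num.sqrt (pi 0 i).
Lemma d_pos i : 0 < d i.
Proof. by rewrite /d sqrtr_gt0 pi_pos. Qed.
Lemma d_neq0 i : d i != 0.
Proof. by rewrite gt_eqF // d_pos. Qed.
Lemma d2 i : d i ^+ 2 = pi 0 i.
Proof. by rewrite /d sqr_sqrtr // ltW // pi_pos. Qed.

Definition g : 'rV[R]_N := \row_i d i.
Definition Dm := sqrt_diag pi.
Definition Di : 'M[R]_N := diag_mx (\row_i (d i)^-1).

Lemma Dm_Di : Dm *m Di = 1%:M.
Proof.
rewrite /Dm /sqrt_diag /Di mulmx_diag; apply/matrixP => i j; rewrite !mxE.
by case: (i == j); rewrite ?mulr1n ?mulr0n // -/(d i) mulfV // d_neq0.
Qed.
Lemma Di_Dm : Di *m Dm = 1%:M.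
Proof. by rewrite /Dm /Di diag_mxC -/Dm Dm_Di. Qed.

Lemma invDm : invmx Dm = Di.
Proof.
have [uD _] := mulmx1_unit Dm_Di.
by rewrite -[RHS]mul1mx -(mulVmx uD) -mulmxA Dm_Di mulmx1.
Qed.

Definition A := Dm *m P *m invmx Dm.

Lemma AE i j : A i j = d i * P i j / d j.
Proof.
rewrite /A invDm /Dm /sqrt_diag /Di mul_mx_diag mxE mul_diag_mx !mxE.
by rewrite -/(d i) -/(d j).
Qed.

Lemma A_ge0 i j : 0 <= A i j.
Proof.
have [P0 _] := sP.
rewrite AE; apply: mulr_ge0; [apply: mulr_ge0|rewrite invr_ge0]; try exact: P0; exact: ltW (d_pos _).
Qed.

Lemma A_sym : A^T = A.
Proof.
apply/matrixP => i j; rewrite mxE !AE.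
have h := rv i j; rewrite -!d2 in h.
have di := d_neq0 i; have dj := d_neq0 j.
have e : d j * P j i / d i - d i * P i j / d j
   = (d j ^+ 2 * P j i - d i ^+ 2 * P i j) / (d i * d j) by field; rewrite di dj.
by apply/eqP; rewrite -subr_eq0 e h subrr mul0r.
Qed.

Lemma gA : g *m A = g.
Proof.
have [_ [_ hP]] := st.
apply/rowP => j; rewrite mxE.
rewrite (eq_bigr (fun k => pi 0 k * P k j / d j)); last first.
  by move=> k _; rewrite mxE AE -d2; ring.
rewrite -big_distrl /=.
have := congr1 (fun M : 'rV[R]_N => M 0 j) hP; rewrite mxE => ->.
by rewrite mxE -d2 expr2 -mulrA mulfV ?d_neq0 // mulr1.
Qed.

Lemma Ag : A *m g^T = g^T.
Proof. by rewrite -A_sym -trmx_mul gA. Qed.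

Lemma nrm_g : nrm g = 1.
Proof.
have [_ [p1 _]] := st.
by rewrite nrmE -p1; apply: eq_bigr => i _; rewrite mxE d2.
Qed.

Lemma ggT : g *m g^T = 1%:M.
Proof. by apply/matrixP => i j; rewrite !ord1 -/(nrm g) nrm_g mxE. Qed.

Lemma gamma1E : gamma1 pi = g^T.
Proof. by apply/matrixP => i j; rewrite !mxE. Qed.

Lemma eig_P lam (w : 'rV_N) : w *m A = lam *: w -> w != 0 -> eigenvalue P lam.
Proof.
move=> hw w0; apply/eigenvalueP; exists (w *m Dm).
  have e : w *m Dm *m P = w *m A *m Dm by rewrite /A invDm -!mulmxA Di_Dm mulmx1.
  by rewrite e hw -scalemxAl.
apply: contra w0 => /eqP h; apply/eqP.
by rewrite -[w]mulmx1 -Dm_Di mulmxA h mul0mx.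
Qed.

Lemma A_sym_entry i j : A i j = d j * P j i / d i.
Proof. by rewrite -AE -{1}A_sym mxE. Qed.

Lemma harm_A lam (w : 'rV_N) : w *m A = lam *: w ->
  forall j, \sum_i P j i * (w 0 i / d i) = lam * (w 0 j / d j).
Proof.
move=> hw j.
have := congr1 (fun M : 'rV[R]_N => M 0 j) hw; rewrite !mxE => e.
rewrite mulrA -e big_distrl /=; apply: eq_bigr => i _.
rewrite A_sym_entry; have di := d_neq0 i; have dj := d_neq0 j.
by field; rewrite di dj.
Qed.

Lemma A_bound s : sorted_eigenvalues P s -> (0 < N)%N ->
  forall z : 'rV_N, z *m g^T = 0 -> bil A z z <= Num.max 0 s`_1 * nrm z.
Proof.
move=> [hch hs] n0 z zg.
set lam0 := Num.max 0 s`_1.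
have l0 : 0 <= lam0 by rewrite le_max lexx.
have ls1 : s`_1 <= lam0 by rewrite le_max lexx orbT.
pose B := A - g^T *m g.
have BT : B^T = B by rewrite /B linearB /= A_sym trmx_mul trmxK.
have [mB [[w wB w0] Bmax]] := rayleigh n0 BT.
have bAB : forall y : 'rV_N, y *m g^T = 0 -> bil A y y = bil B y y.
  by move=> y yg; rewrite /B bilBm bil_rank1 yg mxE mul0r subr0.
have Bg : B *m g^T = 0 by rewrite /B mulmxBl Ag -mulmxA ggT mulmx1 subrr.
have le1 : bil A z z <= mB * nrm z by rewrite bAB //; exact: Bmax.
have [mle|mgt] := lerP mB lam0.
  by apply: le_trans le1 _; rewrite ler_wpM2r // nrm_ge0.
exfalso.
have mB0 : mB != 0 by rewrite gt_eqF // (le_lt_trans l0 mgt).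
have wg : w *m g^T = 0.
  have : w *m B *m g^T = 0 by rewrite -mulmxA Bg mulmx0.
  by rewrite wB -scalemxAl => /eqP; rewrite scaler_eq0 (negbTE mB0) /= => /eqP.
have wA : w *m A = mB *: w.
  have -> : A = B + g^T *m g by rewrite /B subrK.
  by rewrite mulmxDr wB mulmxA wg mul0mx addr0.
have eP := eig_P wA w0.
have mBs : mB \in s by rewrite -root_prod_XsubC -hch -eigenvalue_root_char.
have one_s : 1 \in s.
  rewrite -root_prod_XsubC -hch -eigenvalue_root_char; apply/eigenvalueP; exists pi.
    by rewrite scale1r; case: st => _ [].
  apply/eqP => p0; have [_ [p1 _]] := st; move: p1.
  rewrite p0 big1 => [/eqP|i _]; last by rewrite mxE.
  by rewrite eq_sym oner_eq0.
pose h i := w 0 i / d i.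
have hh := harm_A wA.
have hnz : exists i, h i != 0.
  case: (pselect (exists i, w 0 i != 0)) => [[i wi]|hn].
    by exists i; rewrite /h mulf_neq0 // invr_neq0 // d_neq0.
  exfalso; apply: (negP w0); apply/eqP/rowP => i; rewrite mxE.
  by apply/eqP; apply: contraT => hi; case: hn; exists i.
have mB1 : mB <= 1 by have := maxprin sP hh hnz; rewrite ler_norml => /andP[].
have mBn1 : mB != 1.
  apply/eqP => m1; rewrite m1 in hh.
  have hc : forall i j, h i = h j.
    by apply: (harm_const sP irr) => j; rewrite hh mul1r.
  pose i0 := Ordinal n0.
  have wi : forall i, w 0 i = h i0 * d i.
    by move=> i; rewrite (hc i0 i) /h -mulrA mulVf ?d_neq0 ?mulr1.
  have : (w *m g^T) 0 0 = h i0.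
    rewrite mxE; under eq_bigr => i _ do rewrite !mxE wi -mulrA -expr2 d2.
    by rewrite -big_distrr /=; case: st => _ [-> _]; rewrite mulr1.
  rewrite wg mxE => h00.
  apply: (negP w0); apply/eqP/rowP => i; rewrite wi -h00 mul0r mxE //.
have mBlt : mB < 1 by rewrite lt_neqAle mBn1 mB1.
have geT : transitive (>=%R : rel R) by move=> y x z' h1 h2; exact: le_trans h2 h1.
have geR : reflexive (>=%R : rel R) by move=> x; exact: lexx.
have H := sorted_leq_nth geT geR 0 hs.
have iS : (index mB s < size s)%N by rewrite index_mem.
have jS : (index (1%R : R) s < size s)%N by rewrite index_mem.
have [i0|ipos] := posnP (index mB s).
  have := H 0%N (index (1%R : R) s); rewrite !inE (leq_ltn_trans (leq0n _) iS) jS => /(_ isT isT (leq0n _)).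
  rewrite nth_index // -i0 nth_index //= => h1.
  by move: mBlt; rewrite ltNge h1.
have := H 1%N (index mB s); rewrite !inE (leq_ltn_trans ipos iS) iS => /(_ isT isT ipos).
rewrite nth_index //= => h1.
by move: mgt; rewrite ltNge (le_trans h1 ls1).
Qed.

Lemma A_le_M s : sorted_eigenvalues P s -> (0 < N)%N -> forall y : 'rV_N,
  bil A y y <= bil ((Num.max 0 s`_1)%:M + (1 - Num.max 0 s`_1) *: (gamma1 pi *m (gamma1 pi)^T)) y y.
Proof.
move=> hs n0 y.
set l := Num.max 0 s`_1.
rewrite gamma1E trmxK.
pose a := (y *m g^T) 0 0.
pose z := y - a *: g.
have yga : y *m g^T = a%:M by rewrite [LHS]mx11_scalar.
have zg : z *m g^T = 0 by rewrite /z mulmxBl -scalemxAl ggT yga scalemx1 subrr.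
have gy : (g *m y^T) 0 0 = a.
  rewrite /a; transitivity (((y *m g^T)^T) 0 0); last by rewrite mxE.
  by rewrite trmx_mul trmxK.
have yz : y = z + a *: g by rewrite /z subrK.
have bzg : bil A z g = 0 by rewrite /bil -mulmxA Ag zg mxE.
have bgz : bil A g z = 0 by rewrite (bilC _ _ A_sym) bzg.
have bgg : bil A g g = 1 by rewrite /bil gA ggT mxE.
have nz : nrm y = nrm z + a * a.
  rewrite yz !nrm_bil bil_sq -!nrm_bil nrm_g.
  have h0 : bil 1%:M z g = 0 by rewrite /bil mulmx1 zg mxE.
  by rewrite h0 (bilC _ _ (tr_scalar_mx _ _)) h0; ring.
have hb := A_bound hs n0 zg.
rewrite bilDm bilZm bil_scalar -/(nrm y) bil_rank1 gy -/a.
rewrite [in X in X <= _]yz bil_sq bzg bgz bgg nz.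
have := nrm_ge0 z; rewrite -/l in hb *.
nra.
Qed.


Lemma conj_pow (X Y Z : 'M[R]_N) : X *m Y = 1%:M -> Y *m X = 1%:M ->
  forall m, X *m Z ^+ m *m Y = (X *m Z *m Y) ^+ m.
Proof.
move=> XY YX; elim=> [|m IH]; first by rewrite !expr0 mulmx1 XY.
rewrite exprS [in RHS]exprS -IH -!mulmxE.
by rewrite -[X *m Z *m Y *m (X *m Z ^+ m *m Y)]mulmxA !mulmxA -[X *m Z *m Y *m X]mulmxA YX mulmx1.
Qed.

Lemma main_aux (f : 'I_N -> R) (s : seq R) (zeta eta : R -> R) (eps t : R) (n : nat) :
  sorted_eigenvalues P s ->
  (forall i, 0 <= f i <= 1) -> (exists i, f i = 0) ->
  (forall u, largest_eigenvalue (Gt P pi f u) (zeta u)) ->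
  (forall u, largest_eigenvalue (Ht pi f u (Num.max 0 s`_1)) (eta u)) ->
  (1 <= n)%N -> 0 <= t ->
  let mu := \sum_i pi 0 i * f i in
  let prob := chain_prob P pi
                (fun x : {ffun 'I_n.+1 -> 'I_N} =>
                   n%:R * (mu + eps) <= partial_sum f x) in
  let c := vnorm (Dt f t *m gamma1 pi) ^+ 2 in
  prob <= c * (zeta t)^-1 * expR (- (n%:R * (t * (mu + eps) - ln (zeta t))))
  /\ c * (zeta t)^-1 * expR (- (n%:R * (t * (mu + eps) - ln (zeta t))))
     <= c * (eta t)^-1 * expR (- (n%:R * (t * (mu + eps) - ln (eta t))))
  /\ prob <= expR (- (n%:R * (t * (mu + eps) - ln (eta t)))).
Proof.
move=> hs hf [i0 _] hz he n1 t0 mu prob c.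
have n0 : (0 < N)%N := leq_ltn_trans (leq0n i0) (ltn_ord i0).
have [P0 P1] := sP.
set lam0 := Num.max 0 s`_1.
have l0 : 0 <= lam0 by rewrite le_max lexx.
set D := Dt f t.
pose e i := expR (t * f i / 2).
have DE : D = diag_mx (\row_i e i) by [].
have DT : D^T = D by rewrite DE tr_diag_mx.
have e_pos i : 0 < e i by exact: expR_gt0.
pose G := Gt P pi f t.
pose H := Ht pi f t lam0.
pose M := lam0%:M + (1 - lam0) *: (gamma1 pi *m (gamma1 pi)^T).
have GE : G = D *m A *m D by rewrite /G /Gt /A /Dm !mulmxA.
have HE : H = D *m M *m D by [].
have MT : M^T = M by rewrite /M linearD /= tr_scalar_mx linearZ /= trmx_mul trmxK.
have GT : G^T = G by rewrite GE trmx_mul DT trmx_mul DT A_sym mulmxA.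
have HT : H^T = H by rewrite HE trmx_mul DT trmx_mul DT MT mulmxA.
have bconj : forall S x, bil (D *m S *m D) x x = bil S (x *m D) (x *m D).
  by move=> S x; rewrite /bil trmx_mul DT !mulmxA.
have GH : forall x, bil G x x <= bil H x x.
  by move=> x; rewrite GE HE !bconj; exact: A_le_M.
have Gup := le_largest GT n0 (hz t).
have Hup := le_largest HT n0 (he t).
have Gij : forall i j, G i j = e i * A i j * e j.
  by move=> i j; rewrite GE DE mul_mx_diag mxE mul_diag_mx !mxE.
have G0 : forall i j, 0 <= G i j.
  by move=> i j; rewrite Gij !mulr_ge0 ?A_ge0 // ltW.
have Glo := abs_bound G0 Gup.
have z0 : 0 < zeta t.
  have [j1 hj1] : exists j, 0 < P i0 j.
    case: (pselect (exists j, 0 < P i0 j)) => // hn; exfalso.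
    have : \sum_j P i0 j <= 0.
      by rewrite sumr_le0 // => j _; rewrite leNgt; apply/negP => hj; apply: hn; exists j.
    by rewrite P1 ler10.
  pose one : 'rV[R]_N := const_mx 1.
  have o1 : forall i, one 0 i = 1 by move=> i; rewrite mxE.
  have gpos : 0 < G i0 j1.
    rewrite Gij AE !mulr_gt0 ?invr_gt0 ?d_pos //.
  have : 0 < bil G one one.
    rewrite bilE.
    apply: (lt_le_trans (_ : 0 < one 0 i0 * G i0 j1 * one 0 j1)); first by rewrite !o1 mul1r mulr1.
    apply: le_trans (@sum_ge_term _ _ (fun j => one 0 i0 * G i0 j * one 0 j) j1 _) _.
      by move=> j; rewrite !o1 mul1r mulr1.
    apply: (@sum_ge_term _ _ (fun i => \sum_j one 0 i * G i j * one 0 j) i0) => i.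
    by apply: sumr_ge0 => j _; rewrite !o1 mul1r mulr1.
  move=> h; have := Gup one; have := nrm_ge0 one; move: (bil G one one) (nrm one) h => a b ha hb hab.
  nra.
have Gn := norm_step GT z0 Gup Glo.
have Gp := pow_bil GT (ltW z0) Gup Gn.
pose u := g *m D.
have uT : u^T = D *m g^T by rewrite trmx_mul DT.
have cE : c = nrm u.
  rewrite /c /vnorm sqr_sqrtr ?sumr_ge0 // => [|i _]; last exact: sqr_ge0.
  rewrite nrmE; apply: eq_bigr => i _; rewrite gamma1E -uT mxE //.
have c0 : 0 < c.
  rewrite cE nrmE; apply: lt_le_trans (@sum_ge_term _ _ (fun i => u 0 i ^+ 2) i0 _); last first.
    by move=> i; exact: sqr_ge0.
  rewrite exprn_gt0 // /u DE mul_mx_diag !mxE mulr_gt0 ?d_pos //.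
have ze : zeta t <= eta t.
  have [/eigenvalueP [v vG v0] _] := hz t.
  have nv : 0 < nrm v by rewrite lt0r nrm_ge0 andbT; apply: contra v0 => /eqP /nrm_eq0 ->.
  have : zeta t * nrm v <= eta t * nrm v.
    have -> : zeta t * nrm v = bil G v v by rewrite /bil vG -scalemxAl mxE.
    exact: le_trans (GH v) (Hup v).
  by rewrite ler_pM2r.
have ce : c <= eta t.
  pose y := u *m D.
  have yg : y *m g^T = u *m u^T by rewrite /y uT mulmxA.
  have yg1 : bil 1%:M y g = c by rewrite /bil mulmx1 yg cE.
  have gy1 : bil 1%:M g y = c by rewrite (bilC _ _ (tr_scalar_mx _ _)) yg1.
  have ny : c * c <= nrm y.
    have := nrm_ge0 (y + (- c) *: g).
    rewrite nrm_bil bil_sq yg1 gy1 -nrm_bil -nrm_bil nrm_g.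
    move=> h; nra.
  have hH : bil H u u = lam0 * nrm y + (1 - lam0) * (c * c).
    rewrite HE bconj /M bilDm bilZm bil_scalar -/(nrm y) gamma1E trmxK bil_rank1.
    have -> : (y *m g^T) 0 0 = c by rewrite yg cE.
    by have -> : (g *m y^T) 0 0 = c by rewrite -gy1 /bil mulmx1.
  have := Hup u; rewrite hH -cE => h.
  have : c * c <= eta t * c by nra.
  by rewrite ler_pM2r.
have eta0 : 0 < eta t by exact: lt_le_trans c0 ce.
have eE : forall i, expR (t * f i) = e i ^+ 2.
  by move=> i; rewrite /e -expRM_natl; congr expR; rewrite [RHS]mulrC divfK // pnatr_eq0.
pose Q := P *m (D *m D).
have Qij : forall i j, Q i j = P i j * e j ^+ 2.
  by move=> i j; rewrite /Q DE mulmx_diag mul_mx_diag !mxE expr2.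
pose K := n%:R * (mu + eps).
have [pi0 _] := st.
have Esum : \sum_(x : {ffun 'I_n.+1 -> 'I_N}) path_weight P pi x * expR (t * partial_sum f x)
    = bil (G ^+ n.-1) u u.
  rewrite (eq_bigr (fun x : {ffun 'I_n.+1 -> 'I_N} => pi 0 (x ord0) * (\prod_(j < n) Q (x (inord j)) (x (inord j.+1)))
      * (const_mx 1 : 'cV[R]_N) (x (inord n)) 0)); last first.
    move=> x _; rewrite /path_weight /partial_sum mxE mulr1 mulr_sumr expR_sum -mulrA -big_split /=.
    by congr (_ * _); apply: eq_bigr => j _; rewrite Qij eE.
  rewrite path_sum.
  have piE : pi = g *m Dm.
    by apply/rowP => i; rewrite /Dm /sqrt_diag mul_mx_diag !mxE -/(d i) -expr2 d2.
  have oneE : (const_mx 1 : 'cV[R]_N) = Di *m g^T.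
    by apply/colP => i; rewrite /Di mul_diag_mx !mxE mulVf ?d_neq0.
  rewrite piE oneE.
  have -> : g *m Dm *m Q ^+ n *m (Di *m g^T) = g *m (Dm *m Q ^+ n *m Di) *m g^T.
    by rewrite !mulmxA.
  rewrite (conj_pow _ Dm_Di Di_Dm).
  have cm : Di *m D = D *m Di by rewrite DE /Di diag_mxC.
  have -> : Dm *m Q *m Di = A *m (D *m D).
    rewrite /Q /A invDm -!mulmxA; congr (_ *m (_ *m _)).
    by rewrite -cm mulmxA -cm -!mulmxA.
  have pw : forall k, (A *m (D *m D)) ^+ k.+1 = A *m D *m (D *m A *m D) ^+ k *m D.
    elim=> [|k IH]; first by rewrite expr1 expr0 mulmx1 mulmxA.
    by rewrite exprS IH [in RHS]exprS -!mulmxE !mulmxA.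
  rewrite -(prednK n1) pw /= GE.
  have gA' : g *m Dm *m P *m invmx Dm = g by rewrite -[RHS]gA /A !mulmxA.
  by rewrite /bil uT /u !mulmxA gA'.
have wge : forall x : {ffun 'I_n.+1 -> 'I_N}, 0 <= path_weight P pi x.
  by move=> x; rewrite /path_weight mulr_ge0 ?prodr_ge0.
have chern : prob <= (\sum_(x : {ffun 'I_n.+1 -> 'I_N}) path_weight P pi x * expR (t * partial_sum f x))
                     * expR (- (t * K)).
  rewrite big_distrl /= /prob /chain_prob.
  apply: le_trans (_ : \sum_(x | K <= partial_sum f x)
      path_weight P pi x * expR (t * partial_sum f x) * expR (- (t * K)) <= _).
    apply: ler_sum => x hx.
    rewrite -mulrA -expRD -{1}(mulr1 (path_weight P pi x)) ler_wpM2l //.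
    apply: le_trans (expR_ge1Dx _); rewrite lerDl -mulrBr mulr_ge0 // subr_ge0.
    exact: hx.
  rewrite [X in _ <= X](bigID (fun x => K <= partial_sum f x)) /= lerDl.
  apply: sumr_ge0 => x _; apply: mulr_ge0; [apply: mulr_ge0|]; by rewrite ?expR_ge0 ?wge.
have Eb : \sum_(x : {ffun 'I_n.+1 -> 'I_N}) path_weight P pi x * expR (t * partial_sum f x)
    <= zeta t ^+ n.-1 * c by rewrite Esum cE; exact: Gp.
have key : forall z, 0 < z ->
    c * z^-1 * expR (- (n%:R * (t * (mu + eps) - ln z))) = c * expR (- (t * K)) * z ^+ n.-1.
  move=> z zp; have lz : expR (ln z) = z by apply/eqP; rewrite lnK_eq.
  have -> : - (n%:R * (t * (mu + eps) - ln z)) = - (t * K) + n%:R * ln z by rewrite /K; ring.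
  have zn : z ^+ n = z * z ^+ n.-1 by rewrite -exprS prednK.
  rewrite expRD expRM_natl lz zn.
  by field; rewrite gt_eqF.
have X0 : 0 <= expR (- (t * K)) by exact: expR_ge0.
have p1 : prob <= c * expR (- (t * K)) * zeta t ^+ n.-1.
  apply: le_trans chern _.
  apply: le_trans (_ : zeta t ^+ n.-1 * c * expR (- (t * K)) <= _).
    by rewrite ler_wpM2r.
  by rewrite le_eqVlt; apply/orP; left; apply/eqP; ring.
have zeX : zeta t ^+ n.-1 <= eta t ^+ n.-1 by rewrite lerXn2r // nnegrE ltW.
split; first by rewrite key.
split; first by rewrite !key // ler_wpM2l // mulr_ge0 // ltW.
have eX : expR (- (n%:R * (t * (mu + eps) - ln (eta t)))) = expR (- (t * K)) * (eta t * eta t ^+ n.-1).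
  have lz : expR (ln (eta t)) = eta t by apply/eqP; rewrite lnK_eq.
  have -> : - (n%:R * (t * (mu + eps) - ln (eta t))) = - (t * K) + n%:R * ln (eta t) by rewrite /K; ring.
  by rewrite expRD expRM_natl lz -exprS prednK.
rewrite eX; apply: le_trans p1 _.
apply: le_trans (_ : expR (- (t * K)) * (c * zeta t ^+ n.-1) <= _).
  by rewrite le_eqVlt; apply/orP; left; apply/eqP; ring.
rewrite ler_wpM2l //.
by apply: ler_pM; [exact: ltW c0 | exact: exprn_ge0 (ltW z0) | exact: ce | exact: zeX].
Qed.

End Chain.

Unset Implicit Arguments.

Theorem proposition2 (R : realType) (N : nat) (P : 'M[R]_N) (pi : 'rV[R]_N)
  (f : 'I_N -> R) (s : seq R) (zeta eta : R -> R) (eps t : R) (n : nat) :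
  stochastic P -> irreducible P -> aperiodic P ->
  stationary_distribution P pi -> reversible P pi ->
  sorted_eigenvalues P s ->
  (forall i, 0 <= f i <= 1) -> (exists i, f i = 0) -> (exists i, f i = 1) ->
  (forall u, largest_eigenvalue (Gt P pi f u) (zeta u)) ->
  (forall u, largest_eigenvalue (Ht pi f u (Num.max 0 s`_1)) (eta u)) ->
  0 < eps -> (1 <= n)%N -> 0 <= t ->
  let mu := \sum_i pi 0 i * f i in
  let prob := chain_prob P pi
                (fun x : {ffun 'I_n.+1 -> 'I_N} =>
                   n%:R * (mu + eps) <= partial_sum f x) in
  let c := vnorm (Dt f t *m gamma1 pi) ^+ 2 in
  prob <= c * (zeta t)^-1 * expR (- (n%:R * (t * (mu + eps) - ln (zeta t))))
  /\ c * (zeta t)^-1 * expR (- (n%:R * (t * (mu + eps) - ln (zeta t))))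
     <= c * (eta t)^-1 * expR (- (n%:R * (t * (mu + eps) - ln (eta t))))
  /\ prob <= expR (- (n%:R * (t * (mu + eps) - ln (eta t)))).
Proof.
move=> sP irr _ st rv hs hf h0 _ hz he _ n1 t0.
exact: (main_aux sP irr st rv eps hs hf h0 hz he n1 t0).
Qed.
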